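(* Let $\mathrm{M}=\langle e_1+I,\ e_2+I,\ -I\rangle$, where $e_1,e_2$ are the standard basis vectors of $E^2$. The group $\mathrm{Aff}(\mathrm{M})$ has a normal dihedral subgroup $\mathrm{K}$ of order 4 generated by $(e_1/2+I)_\star$ and $(e_2/2+I)_\star$. The map $\eta:\mathrm{Aff}(\mathrm{M})\to\mathrm{PGL}(2,\mathbb Z)$ defined by $\eta((a+A)_\star)=\pm A$ for each $A\in\mathrm{GL}(2,\mathbb Z)$ is an epimorphism with kernel $\mathrm{K}$. The map $\sigma:\mathrm{PGL}(2,\mathbb Z)\to\mathrm{Aff}(\mathrm{M})$ defined by $\sigma(\pm A)=A_\star$ is a monomorphism, and $\sigma$ is a right inverse of $\eta$.
   Context: Affine maps of $E^2$ are written $a+A$ (meaning $x\mapsto a+Ax$); $a+I$ is translation by $a$. For a 2-space group $\mathrm{M}$, let $N_A(\mathrm{M})$ be its normalizer in the affine group of $E^2$. Each $a+A\in N_A(\mathrm{M})$ induces an affinity $(a+A)_\star:\mathrm{M}x\mapsto\mathrm{M}(a+Ax)$ of the flat orbifold $E^2/\mathrm{M}$; $\mathrm{Aff}(\mathrm{M})$ is the group of all such affinities (isomorphic to $N_A(\mathrm{M})/\mathrm{M}$). A dihedral group of order 4 means the Klein four-group. $\mathrm{PGL}(2,\mathbb Z)=\mathrm{GL}(2,\mathbb Z)/\{\pm I\}$, with the class of $A$ written $\pm A$. *)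

(* Defs.v *)
From HB Require Import structures.
From mathcomp Require Import all_boot all_order all_algebra.
From Stdlib Require Rdefinitions.
From mathcomp Require Import Rstruct.
Set Implicit Arguments. Unset Strict Implicit. Unset Printing Implicit Defensive.
Import Order.TTheory GRing.Theory Num.Theory.
Local Open Scope ring_scope.

Notation vec := 'cV[Rdefinitions.R]_2.
Notation mat := 'M[Rdefinitions.R]_2.

(* An affine map  a + A  :  x |-> a + A x  (A is required invertible
   separately, see [is_aff]). *)
Record affmap := Affmap { tr : vec ; lin : mat }.

Definition aff_apply (f : affmap) (x : vec) : vec := tr f + lin f *m x.
Definition is_aff (f : affmap) : Prop := lin f \in unitmx.

Definition aff_id : affmap := Affmap 0 1%:M.
Definition aff_comp (f g : affmap) : affmap :=
  Affmap (tr f + lin f *m tr g) (lin f *m lin g).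
Definition aff_inv (f : affmap) : affmap :=
  Affmap (- (invmx (lin f) *m tr f)) (invmx (lin f)).

Definition transl (a : vec) : affmap := Affmap a 1%:M.
Definition linmap (A : mat) : affmap := Affmap 0 A.

Definition e1 : vec := delta_mx 0 0.
Definition e2 : vec := delta_mx 1 0.

Inductive gen_by (S : affmap -> Prop) : affmap -> Prop :=
| gen_base f : S f -> gen_by S f
| gen_one : gen_by S aff_id
| gen_comp f g : gen_by S f -> gen_by S g -> gen_by S (aff_comp f g)
| gen_inv f : gen_by S f -> gen_by S (aff_inv f).

Definition Mgens (f : affmap) : Prop :=
  f = transl e1 \/ f = transl e2 \/ f = linmap (- 1%:M).
Definition inM : affmap -> Prop := gen_by Mgens.

Definition inN (f : affmap) : Prop :=
  is_aff f /\ forall g, inM g <-> inM (aff_comp (aff_comp f g) (aff_inv f)).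

Definition orbit (x : vec) (y : vec) : Prop :=
  exists2 g, inM g & y = aff_apply g x.

(* For f, g in N_A(M): the induced affinities f_* , g_* of E^2/M
   (f_* : Mx |-> M(f x)) are equal as maps of the orbifold. *)
Definition star_eq (f g : affmap) : Prop :=
  forall x y, orbit (aff_apply f x) y <-> orbit (aff_apply g x) y.

(* Since f |-> f_* is a homomorphism N_A(M) -> Aff(M), an affinity f_* lies
   in K iff it equals g_* for some g in the subgroup generated by the two
   half-translations. *)
Definition Kgens (f : affmap) : Prop :=
  f = transl (2^-1 *: e1) \/ f = transl (2^-1 *: e2).
Definition inK (f : affmap) : Prop :=
  inN f /\ exists2 g, gen_by Kgens g & star_eq f g.

Definition inGLZ (B : 'M[int]_2) : Prop := B \in unitmx.
Definition Zmat (B : 'M[int]_2) : mat := map_mx (fun z : int => z%:~R) B.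

(* Main.v *)
Require Import Defs.
From HB Require Import structures.
From mathcomp Require Import all_boot all_order all_algebra.
From Stdlib Require Rdefinitions.
From mathcomp Require Import Rstruct.
From mathcomp Require Import ring lra.
From Stdlib Require Import Classical.
From mathcomp Require Import zify.
Import Order.TTheory GRing.Theory Num.Theory.
Local Open Scope ring_scope.

Local Notation RR := Rdefinitions.R.

Definition intv (v : vec) := forall i : 'I_2, v i 0 \is a Num.int.
Definition intm (A : mat) := forall i j : 'I_2, A i j \is a Num.int.

Lemma intvD u v : intv u -> intv v -> intv (u + v).
Proof. by move=> hu hv i; rewrite mxE rpredD. Qed.
Lemma intvN u : intv u -> intv (- u).
Proof. by move=> hu i; rewrite mxE rpredN. Qed.
Lemma intvNE u : intv (- u) -> intv u.
Proof. by move=> /intvN; rewrite opprK. Qed.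
Lemma intvB u v : intv u -> intv v -> intv (u - v).
Proof. by move=> hu hv; apply: intvD => //; apply: intvN. Qed.
Lemma intv0 : intv 0.
Proof. by move=> i; rewrite mxE int_num0. Qed.

Lemma mulmx2E (A : mat) (v : vec) i : (A *m v) i 0 = A i 0 * v 0 0 + A i 1 * v 1 0.
Proof.
rewrite mxE !big_ord_recl big_ord0 addr0.
have E0 : ord0 = 0 :> 'I_2 by apply/val_inj.
have E1 : lift ord0 ord0 = 1 :> 'I_2 by apply/val_inj.
by rewrite E0 E1.
Qed.
Lemma mulmx22E (A B : mat) i j : (A *m B) i j = A i 0 * B 0 j + A i 1 * B 1 j.
Proof.
rewrite mxE !big_ord_recl big_ord0 addr0.
have E0 : ord0 = 0 :> 'I_2 by apply/val_inj.
have E1 : lift ord0 ord0 = 1 :> 'I_2 by apply/val_inj.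
by rewrite E0 E1.
Qed.

Lemma intv_mul A v : intm A -> intv v -> intv (A *m v).
Proof. by move=> hA hv i; rewrite mulmx2E rpredD // rpredM. Qed.
Lemma intm_mul A B : intm A -> intm B -> intm (A *m B).
Proof. by move=> hA hB i j; rewrite mulmx22E rpredD // rpredM. Qed.
Lemma intm1 : intm 1%:M.
Proof. by move=> i j; rewrite mxE; case: (i == j); rewrite ?int_num0 ?int_num1. Qed.
Lemma intmN A : intm A -> intm (- A).
Proof. by move=> hA i j; rewrite mxE rpredN. Qed.

Lemma ord2P (P : 'I_2 -> Prop) : P 0 -> P 1 -> forall i, P i.
Proof. by move=> h0 h1 [[|[|//]] Hi]; [rewrite (_ : Ordinal Hi = 0) | rewrite (_ : Ordinal Hi = 1)] => //; apply/val_inj. Qed.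

Lemma vecP (u v : vec) : u 0 0 = v 0 0 -> u 1 0 = v 1 0 -> u = v.
Proof.
move=> h0 h1; apply/matrixP => i j; rewrite (ord1 j); move: i; exact: ord2P.
Qed.

Lemma e1E i : e1 i 0 = (i == 0)%:R.
Proof. by rewrite mxE andbT. Qed.
Lemma e2E i : e2 i 0 = (i == 1)%:R.
Proof. by rewrite mxE andbT. Qed.

Lemma vec_decomp (v : vec) : v = v 0 0 *: e1 + v 1 0 *: e2.
Proof. by apply: vecP; rewrite !mxE /= ?mulr1 ?mulr0 ?addr0 ?add0r. Qed.

Lemma intv_e1 : intv e1.
Proof. by apply: ord2P; rewrite e1E ?int_num0 ?int_num1. Qed.
Lemma intv_e2 : intv e2.
Proof. by apply: ord2P; rewrite e2E ?int_num0 ?int_num1. Qed.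

Lemma gen_transl_add S a b :
  gen_by S (transl a) -> gen_by S (transl b) -> gen_by S (transl (a + b)).
Proof. by move=> ha hb; have := gen_comp ha hb; rewrite /aff_comp /= !mul1mx. Qed.
Lemma gen_transl_opp S a : gen_by S (transl a) -> gen_by S (transl (- a)).
Proof. by move=> ha; have := gen_inv ha; rewrite /aff_inv /= invmx1 mul1mx. Qed.
Lemma gen_transl_int S a (z : int) :
  gen_by S (transl a) -> gen_by S (transl (z%:~R *: a)).
Proof.
move=> ha.
have hn : forall n : nat, gen_by S (transl (n%:R *: a)).
  elim=> [|n IH]; first by rewrite scale0r; exact: gen_one.
  by rewrite mulrSr scalerDl scale1r; apply: gen_transl_add.
case: z => n; first exact: hn.
by rewrite NegzE scaleNr; apply: gen_transl_opp; apply: hn.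
Qed.

Lemma invmx_uniq (A B : mat) : A *m B = 1%:M -> invmx A = B.
Proof.
move=> h; have [uA _] := mulmx1_unit h.
by rewrite -[invmx A]mulmx1 -h mulmxA mulVmx // mul1mx.
Qed.

Lemma invmxN1 : invmx (- 1%:M : mat) = - 1%:M.
Proof. by apply: invmx_uniq; rewrite mulNmx mulmxN opprK mul1mx. Qed.

Lemma gen_transl_M v : intv v -> inM (transl v).
Proof.
move=> hv; have [z1 E1] := intrP (hv 0); have [z2 E2] := intrP (hv 1).
rewrite (vec_decomp v) E1 E2; apply: gen_transl_add; apply: gen_transl_int;
  apply: gen_base; rewrite /Mgens; tauto.
Qed.

Lemma inM_char g : inM g <-> intv (tr g) /\ (lin g = 1%:M \/ lin g = - 1%:M).
Proof.
split.
  elim => {g} [f|| f g _ [hf lf] _ [hg lg] | f _ [hf lf]].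
  - by case=> [->|[->|->]]; split; rewrite /=;
      first [exact: intv_e1 | exact: intv_e2 | exact: intv0 | tauto].
  - by split; [exact: intv0 | left].
  - rewrite /aff_comp /=; split.
      by case: lf => ->; rewrite ?mulNmx mul1mx; apply: intvD => //; apply: intvN.
    by case: lf => ->; case: lg => ->; rewrite ?mulNmx ?mulmxN ?opprK mul1mx; tauto.
  - rewrite /aff_inv /=; case: lf => ->; rewrite ?invmxN1 ?invmx1 ?mulNmx mul1mx ?opprK;
      split; try tauto; by apply: intvN.
case: g => v A /= [hv [->|->]]; first exact: gen_transl_M.
have -> : Affmap v (- 1%:M) = aff_comp (transl v) (linmap (- 1%:M)).
  by rewrite /aff_comp /= mulmx0 addr0 mul1mx.
by apply: gen_comp; [exact: gen_transl_M | apply: gen_base; rewrite /Mgens; tauto].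
Qed.

Definition orb (x y : vec) := intv (y - x) \/ intv (y + x).

Lemma orbit_char x y : Defs.orbit x y <-> orb x y.
Proof.
split.
  case=> g /inM_char [ht [hl|hl]] ->; rewrite /orb /aff_apply hl ?mulNmx mul1mx.
    by left; rewrite addrK.
  by right; rewrite addrNK.
case=> h.
  exists (Affmap (y - x) 1%:M); first by apply/inM_char; split => //; left.
  by rewrite /aff_apply /= mul1mx subrK.
exists (Affmap (y + x) (- 1%:M)); first by apply/inM_char; split => //; right.
by rewrite /aff_apply /= mulNmx mul1mx addrK.
Qed.

Lemma orb_refl x : orb x x.
Proof. by left; rewrite subrr; exact: intv0. Qed.

Lemma intv_eq u v : u = v -> intv u -> intv v.
Proof. by move=> ->. Qed.

Lemma orb_sym x y : orb x y -> orb y x.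
Proof.
case=> h; [left|right]; last by rewrite addrC.
by rewrite -opprB; apply: intvN.
Qed.

Lemma orb_trans x y z : orb x y -> orb y z -> orb x z.
Proof.
case=> h1; case=> h2.
- left; refine (intv_eq _ _ _ (intvD _ _ h2 h1)); by apply/matrixP => i j; rewrite !mxE; ring.
- right; refine (intv_eq _ _ _ (intvB _ _ h2 h1)); by apply/matrixP => i j; rewrite !mxE; ring.
- right; refine (intv_eq _ _ _ (intvD _ _ h2 h1)); by apply/matrixP => i j; rewrite !mxE; ring.
- left; refine (intv_eq _ _ _ (intvB _ _ h2 h1)); by apply/matrixP => i j; rewrite !mxE; ring.
Qed.

Lemma star_eq_char f g :
  star_eq f g <-> forall x, orb (aff_apply f x) (aff_apply g x).
Proof.
split.
  move=> h x; apply/orbit_char; apply/(h x (aff_apply g x)); apply/orbit_char.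
  exact: orb_refl.
move=> h x y; rewrite !orbit_char; split => H.
  exact (orb_trans _ _ _ (orb_sym _ _ (h x)) H).
exact (orb_trans _ _ _ (h x) H).
Qed.

Lemma int_small (z : RR) : z \is a Num.int -> z != 0 -> `|z| < 1 -> False.
Proof. by move=> hz nz; rewrite ltNge norm_intr_ge1. Qed.

Lemma two_pts (c w : vec) i s t : w i 0 != 0 -> s != t -> `|(s - t) * w i 0| < 1 ->
  intv (c + s *: w) -> intv (c + t *: w) -> False.
Proof.
move=> nw nst hlt h1 h2.
have E : (c + s *: w - (c + t *: w)) i 0 = (s - t) * w i 0 by rewrite !mxE; ring.
apply: (int_small ((s - t) * w i 0)) => //.
  by rewrite -E; exact: (intvB _ _ h1 h2 i).
by rewrite mulf_neq0 // subr_eq0.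
Qed.

Lemma pair_bad (c w : vec) i (h : RR) : w i 0 != 0 -> 0 < h -> 2 * (h * `|w i 0|) < 1 ->
  forall m n : nat, (m < n <= 2)%N ->
  intv (c + (m%:R * h) *: w) -> intv (c + (n%:R * h) *: w) -> False.
Proof.
move=> nw hp hb m n /andP [hmn hn2] h1 h2.
have wp : 0 < `|w i 0| by rewrite normr_gt0.
apply: (two_pts _ _ _ _ _ nw _ _ h1 h2); clear h1 h2;
  case: n hmn hn2 => [|[|[|n]]] hmn hn2 //; case: m hmn => [|[|m]] hmn //;
  rewrite ?mulr1n ?mulr0n.
- by apply/negbT/lt_eqF; lra.
- by apply/negbT/lt_eqF; lra.
- by apply/negbT/lt_eqF; lra.
- by rewrite normrM ler0_norm; lra.
- by rewrite normrM ler0_norm; lra.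
- by rewrite normrM ler0_norm; lra.
Qed.

Lemma mul_delta_entry (C : mat) i j : (C *m (delta_mx j 0 : vec)) i 0 = C i j.
Proof. by move: j; apply: ord2P; rewrite mulmx2E !mxE /= ?mulr1 ?mulr0 ?addr0 ?add0r. Qed.

Lemma allP0 (c : vec) (C : mat) : (forall x, intv (c + C *m x)) -> C = 0 /\ intv c.
Proof.
move=> h; have hc : intv c by have := h 0; rewrite mulmx0 addr0.
split => //; apply/matrixP => i j; rewrite mxE.
case: (eqVneq (C i j) 0) => // nz; exfalso.
set w := C *m (delta_mx j 0 : vec).
have wE : w i 0 = C i j by exact: mul_delta_entry.
have nw : w i 0 != 0 by rewrite wE.
apply: (two_pts _ _ _ ((2 * C i j)^-1) 0 nw).
- by rewrite invr_eq0 mulf_neq0 // pnatr_eq0.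
- rewrite subr0 wE invfM -mulrA mulVf // mulr1 ger0_norm; lra.
- by rewrite /w scalemxAr; apply: h.
- by rewrite scale0r addr0.
Qed.

Lemma vec_neq0 (w : vec) : w != 0 -> exists i, w i 0 != 0.
Proof.
move=> nw; case: (eqVneq (w 0 0) 0) => h0; last by exists 0.
case: (eqVneq (w 1 0) 0) => h1; last by exists 1.
by move: nw; rewrite (_ : w = 0) ?eqxx //; apply: vecP; rewrite mxE.
Qed.

Lemma cols0 (C : mat) : C *m e1 = 0 -> C *m e2 = 0 -> C = 0.
Proof.
move=> h1 h2; apply/matrixP => i j; rewrite mxE; move: j; apply: ord2P.
  by rewrite -(mul_delta_entry C i 0) -/e1 h1 mxE.
by rewrite -(mul_delta_entry C i 1) -/e2 h2 mxE.
Qed.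

Lemma exists_u (C D : mat) : C != 0 -> D != 0 ->
  exists u : vec, C *m u != 0 /\ D *m u != 0.
Proof.
move=> hC hD.
case: (classic (exists u : vec, C *m u != 0 /\ D *m u != 0)) => // hn; exfalso.
have hu : forall u : vec, C *m u = 0 \/ D *m u = 0.
  move=> u; case: (eqVneq (C *m u) 0) => c; [by left|].
  case: (eqVneq (D *m u) 0) => d; [by right|].
  by exfalso; apply: hn; exists u; split.
have d3 := hu (e1 + e2); rewrite !mulmxDr in d3.
case: (hu e1) => a1; case: (hu e2) => a2.
- by move/eqP: hC; apply; apply: cols0.
- case: d3 => a3.
    by move/eqP: hC; apply; apply: cols0 => //; move: a3; rewrite a1 add0r.
  by move/eqP: hD; apply; apply: cols0 => //; move: a3; rewrite a2 addr0.
- case: d3 => a3.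
    by move/eqP: hC; apply; apply: cols0 => //; move: a3; rewrite a2 addr0.
  by move/eqP: hD; apply; apply: cols0 => //; move: a3; rewrite a1 add0r.
- by move/eqP: hD; apply; apply: cols0.
Qed.

Lemma cover (c d : vec) (C D : mat) :
  (forall x, intv (c + C *m x) \/ intv (d + D *m x)) ->
  (C = 0 /\ intv c) \/ (D = 0 /\ intv d).
Proof.
move=> H.
case: (classic (C = 0 /\ intv c)) => [h|h1]; first by left.
case: (classic (D = 0 /\ intv d)) => [h|h2]; first by right.
exfalso.
have hC : C != 0.
  apply/eqP => C0; apply: h2; apply: allP0 => x; case: (H x) => // h.
  by exfalso; apply: h1; split => //; move: h; rewrite C0 mul0mx addr0.
have hD : D != 0.
  apply/eqP => D0; apply: h1; apply: allP0 => x; case: (H x) => // h.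
  by exfalso; apply: h2; split => //; move: h; rewrite D0 mul0mx addr0.
have [u [cu du]] := exists_u _ _ hC hD.
have [i ci] := vec_neq0 _ cu; have [k dk] := vec_neq0 _ du.
have pp : 0 < `|(C *m u) i 0| by rewrite normr_gt0.
have qq : 0 < `|(D *m u) k 0| by rewrite normr_gt0.
set p := `|(C *m u) i 0| in pp *; set q := `|(D *m u) k 0| in qq *.
set h := (3 * (p + q))^-1.
have hpos : 0 < h by rewrite invr_gt0; lra.
have hsum : h * p + h * q = 3^-1.
  by rewrite -mulrDr /h invfM -mulrA mulVf ?mulr1 //; apply/negbT/gt_eqF; lra.
have hp0 : 0 < h * p by apply: mulr_gt0.
have hq0 : 0 < h * q by apply: mulr_gt0.
have bC : 2 * (h * p) < 1 by lra.
have bD : 2 * (h * q) < 1 by lra.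
have pt := fun m : nat => H ((m%:R * h) *: u).
move: (pt 0%N) (pt 1%N) (pt 2%N); rewrite -!scalemxAr.
case=> [a0|b0]; case=> [a1|b1]; case=> [a2|b2].
- exact: (pair_bad _ _ _ _ ci hpos bC 0 1 isT a0 a1).
- exact: (pair_bad _ _ _ _ ci hpos bC 0 1 isT a0 a1).
- exact: (pair_bad _ _ _ _ ci hpos bC 0 2 isT a0 a2).
- exact: (pair_bad _ _ _ _ dk hpos bD 1 2 isT b1 b2).
- exact: (pair_bad _ _ _ _ ci hpos bC 1 2 isT a1 a2).
- exact: (pair_bad _ _ _ _ dk hpos bD 0 2 isT b0 b2).
- exact: (pair_bad _ _ _ _ dk hpos bD 0 1 isT b0 b1).
- exact: (pair_bad _ _ _ _ dk hpos bD 0 1 isT b0 b1).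
Qed.

Definition rel (f g : affmap) :=
  (lin g = lin f /\ intv (tr g - tr f)) \/ (lin g = - lin f /\ intv (tr g + tr f)).

Lemma applyB f g x : aff_apply g x - aff_apply f x = (tr g - tr f) + (lin g - lin f) *m x.
Proof. by rewrite /aff_apply mulmxBl opprD addrACA. Qed.
Lemma applyD f g x : aff_apply g x + aff_apply f x = (tr g + tr f) + (lin g + lin f) *m x.
Proof. by rewrite /aff_apply mulmxDl addrACA. Qed.

Lemma star_eq_rel f g : star_eq f g <-> rel f g.
Proof.
rewrite star_eq_char; split.
  move=> h.
  have := @cover (tr g - tr f) (tr g + tr f) (lin g - lin f) (lin g + lin f).
  case.
  - by move=> x; rewrite -applyB -applyD; exact: h.
  - by case=> /eqP; rewrite subr_eq0 => /eqP ? ?; left.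
  - by case=> /eqP; rewrite addr_eq0 => /eqP ? ?; right.
case=> [[E hv]|[E hv]] x; rewrite /orb.
  by left; rewrite applyB E subrr mul0mx addr0.
by right; rewrite applyD E addNr mul0mx addr0.
Qed.

Definition cj f g := aff_comp (aff_comp f g) (aff_inv f).
Definition Nc f := [/\ lin f \in unitmx, intm (lin f), intm (invmx (lin f)) & intv (tr f + tr f)].

Lemma cj_lin f g : lin (cj f g) = lin f *m lin g *m invmx (lin f).
Proof. by []. Qed.
Lemma cj_tr1 a A b : A \in unitmx -> tr (cj (Affmap a A) (Affmap b 1%:M)) = A *m b.
Proof.
move=> uA; rewrite /cj /aff_comp /aff_inv /= mulmx1 mulmxN mulmxA mulmxV // mul1mx.
by rewrite addrAC subrr add0r.
Qed.
Lemma cj_trN a A b : A \in unitmx ->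
  tr (cj (Affmap a A) (Affmap b (- 1%:M))) = (a + a) + A *m b.
Proof.
move=> uA; rewrite /cj /aff_comp /aff_inv /= !(mulmxN, mulNmx, mulmx1, opprK).
by rewrite mulmxA mulmxV // mul1mx addrAC.
Qed.

Lemma intv_delta j : intv (delta_mx j 0 : vec).
Proof. by move: j; apply: ord2P; [exact: intv_e1 | exact: intv_e2]. Qed.

Lemma intm_cols (A : mat) : (forall j, intv (A *m (delta_mx j 0 : vec))) -> intm A.
Proof. by move=> h i j; rewrite -mul_delta_entry; apply: h. Qed.

Lemma conj_back (A B E : mat) : A \in unitmx -> A *m B *m invmx A = E ->
  B = invmx A *m E *m A.
Proof.
by move=> uA <-; rewrite !mulmxA mulVmx // mul1mx -mulmxA mulVmx // mulmx1.
Qed.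

Lemma inN_char f : inN f <-> Nc f.
Proof.
case: f => a A; split.
  case=> uA H; rewrite /is_aff /= in uA; split => //=.
  - apply: intm_cols => j.
    have /H /inM_char [+ _] := gen_transl_M _ (intv_delta j).
    by rewrite -/(cj _ _) cj_tr1.
  - apply: intm_cols => j.
    have hM : inM (cj (Affmap a A) (transl (invmx A *m delta_mx j 0))).
      apply/inM_char; rewrite cj_tr1 // mulmxA mulmxV // mul1mx; split.
        exact: intv_delta.
      by rewrite cj_lin /= mulmx1 mulmxV //; left.
    by have /inM_char [+ _] := (H (transl (invmx A *m delta_mx j 0))).2 hM.
  - have hM : inM (linmap (- 1%:M)) by apply: gen_base; rewrite /Mgens; tauto.
    move/H: hM => /inM_char [+ _]; rewrite -/(cj _ _) /linmap cj_trN // mulmx0 addr0.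
    done.
case=> /= uA iA iAi ha; split => // -[b B].
rewrite -/(cj _ _); split.
  case/inM_char => /= hb [->|->].
    apply/inM_char; rewrite cj_tr1 // cj_lin /= mulmx1 mulmxV //; split; last by left.
    exact: intv_mul.
  apply/inM_char; rewrite cj_trN // cj_lin /= mulmxN mulmx1 mulNmx mulmxV //.
  by split; [apply: intvD => //; exact: intv_mul | right].
case/inM_char => ht hl; rewrite cj_lin /= in hl.
have hB : B = 1%:M \/ B = - 1%:M.
  case: hl => /(conj_back _ _ _ uA) ->; [left | right];
    by rewrite ?mulmxN ?mulNmx mulmx1 mulVmx.
apply/inM_char; split => //=.
case: hB => EB; move: ht; rewrite EB.
  rewrite cj_tr1 // => hv.
  by rewrite -[b]mul1mx -(mulVmx uA) -mulmxA; apply: intv_mul.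
rewrite cj_trN // => hv.
have hAb : intv (A *m b) by rewrite -[A *m b](addKr (a + a)); apply: intvD => //; apply: intvN.
by rewrite -[b]mul1mx -(mulVmx uA) -mulmxA; apply: intv_mul.
Qed.

Lemma ZmatM (A B : 'M[int]_2) : Zmat (A *m B) = Zmat A *m Zmat B.
Proof. by rewrite /Zmat map_mxM. Qed.
Lemma ZmatN (A : 'M[int]_2) : Zmat (- A) = - Zmat A.
Proof. by rewrite /Zmat map_mxN. Qed.
Lemma Zmat1 : Zmat 1%:M = 1%:M.
Proof. by rewrite /Zmat map_scalar_mx rmorph1. Qed.
Lemma Zmat_inj (A B : 'M[int]_2) : Zmat A = Zmat B -> A = B.
Proof.
move=> h; apply/matrixP => i j; have := congr1 (fun M : mat => M i j) h.
by rewrite !mxE => /intr_inj.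
Qed.
Lemma intm_Zmat (A : 'M[int]_2) : intm (Zmat A).
Proof. by move=> i j; rewrite mxE intr_int. Qed.

Definition Zof (A : mat) : 'M[int]_2 := \matrix_(i, j) Num.floor (A i j).
Lemma ZofK A : intm A -> Zmat (Zof A) = A.
Proof. by move=> h; apply/matrixP => i j; rewrite !mxE floorK. Qed.

Lemma Zmat_unit (B : 'M[int]_2) : inGLZ B ->
  Zmat B \in unitmx /\ invmx (Zmat B) = Zmat (invmx B).
Proof.
move=> uB; have h : Zmat B *m Zmat (invmx B) = 1%:M by rewrite -ZmatM mulmxV // Zmat1.
by split; [exact: (mulmx1_unit h).1 | exact: invmx_uniq].
Qed.

Lemma star_eq_refl f : star_eq f f.
Proof. by []. Qed.
Lemma star_eq_trans f g h : star_eq f g -> star_eq g h -> star_eq f h.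
Proof. by move=> h1 h2 x y; rewrite h1 h2. Qed.

Lemma Nc_Zmat B : inGLZ B -> Nc (linmap (Zmat B)).
Proof.
move=> uB; have [u i] := Zmat_unit _ uB; split => //=.
- exact: intm_Zmat.
- by rewrite i; exact: intm_Zmat.
- by rewrite addr0; exact: intv0.
Qed.

Lemma Nc_transl v : intv (v + v) -> Nc (transl v).
Proof. by move=> h; split => //=; rewrite ?unitmx1 ?invmx1 //; exact: intm1. Qed.

Lemma Nc_comp f g : Nc f -> Nc g -> Nc (aff_comp f g).
Proof.
case: f => a A; case: g => b B [/= uA iA iAi ha] [/= uB iB iBi hb]; split => /=.
- by rewrite unitmx_mul uA uB.
- exact: intm_mul.
- rewrite (invmx_uniq _ (invmx B *m invmx A)); first exact: intm_mul.
  by rewrite mulmxA -(mulmxA A) mulmxV // mulmx1 mulmxV.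
- rewrite addrACA -mulmxDr; apply: intvD => //; exact: intv_mul.
Qed.

Lemma Nc_inv f : Nc f -> Nc (aff_inv f).
Proof.
case: f => a A [/= uA iA iAi ha]; split => /=.
- by rewrite unitmx_inv.
- done.
- by rewrite invmxK.
- by rewrite -opprD -mulmxDr; apply: intvN; exact: intv_mul.
Qed.

Lemma half_double : (2^-1 + 2^-1 : RR) = 1.
Proof. lra. Qed.

Lemma Kform g : gen_by Kgens g -> lin g = 1%:M /\ intv (tr g + tr g).
Proof.
elim => {g} [f|| f g _ [lf hf] _ [lg hg] | f _ [lf hf]].
- case=> -> /=; rewrite -scalerDl half_double scale1r; split => //;
    [exact: intv_e1 | exact: intv_e2].
- by split => //=; rewrite addr0; exact: intv0.
- rewrite /aff_comp /= lf lg !mul1mx.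
  split => //.
  by rewrite addrACA; apply: intvD.
- rewrite /aff_inv /= lf invmx1 !mul1mx; split => //.
  by rewrite -opprD; apply: intvN.
Qed.

Lemma gen_K a : intv (a + a) -> gen_by Kgens (transl a).
Proof.
move=> h; have [z1 E1] := intrP (h 0); have [z2 E2] := intrP (h 1).
have -> : a = z1%:~R *: (2^-1 *: e1) + z2%:~R *: (2^-1 *: e2).
  rewrite -E1 -E2; apply: vecP; rewrite !mxE /=; lra.
apply: gen_transl_add; apply: gen_transl_int; apply: gen_base; rewrite /Kgens; tauto.
Qed.

Definition kk (r s : int) := transl (2^-1 *: (r%:~R *: e1 + s%:~R *: e2)).

Lemma kk0 r s : tr (kk r s) 0 0 = 2^-1 * r%:~R.
Proof. by rewrite /= !mxE /= mulr1 mulr0 addr0. Qed.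
Lemma kk1 r s : tr (kk r s) 1 0 = 2^-1 * s%:~R.
Proof. by rewrite /= !mxE /= mulr1 mulr0 add0r. Qed.

Lemma one_neq_m1 : (1%:M : mat) <> - 1%:M.
Proof. by move=> /(congr1 (fun M : mat => M 0 0)); rewrite !mxE /=; lra. Qed.

Lemma half_not_int (x : RR) : x = 2^-1 \/ x = - 2^-1 -> ~ (x \is a Num.int).
Proof.
move=> hx hi; apply: (int_small _ hi).
  by case: hx => ->; [|rewrite oppr_eq0]; rewrite invr_eq0 pnatr_eq0.
by case: hx => ->; rewrite ?normrN ger0_norm; lra.
Qed.

Lemma transl_neq u v : ~ intv (v - u) -> ~ star_eq (transl u) (transl v).
Proof. by move=> h /star_eq_rel [[_ H]|[E _]]; [exact: h H | exact: one_neq_m1 E]. Qed.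

Lemma kk_neq r s r' s' : (r' - r = 1 \/ r' - r = -1) \/ (s' - s = 1 \/ s' - s = -1) ->
  ~ star_eq (kk r s) (kk r' s').
Proof.
move=> H; apply: transl_neq => h.
case: H => H.
  apply: (half_not_int ((tr (kk r' s') - tr (kk r s)) 0 0)); last exact: h 0.
  rewrite mxE [X in _ + X]mxE !kk0.
  have E : (r'%:~R - r%:~R : RR) = (r' - r)%:~R by rewrite intrB.
  by case: H => H; [left | right]; rewrite -mulrBr E H; rewrite ?mulrN1 ?mulr1.
apply: (half_not_int ((tr (kk r' s') - tr (kk r s)) 1 0)); last exact: h 1.
rewrite mxE [X in _ + X]mxE !kk1.
have E : (s'%:~R - s%:~R : RR) = (s' - s)%:~R by rewrite intrB.
by case: H => H; [left | right]; rewrite -mulrBr E H; rewrite ?mulrN1 ?mulr1.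
Qed.

Lemma half_parity (x : RR) : (x + x) \is a Num.int ->
  exists r : int, (r = 0 \/ r = 1) /\ (x - 2^-1 * r%:~R) \is a Num.int.
Proof.
case/intrP => z hz.
have hd := divz_eq z 2.
have h0 : (0 <= (z %% 2)%Z)%R by rewrite modz_ge0.
have h1 : ((z %% 2)%Z < 2)%R by rewrite ltz_mod.
exists (z %% 2)%Z; split; first lia.
have E : (z%:~R : RR) = (z %/ 2)%Z%:~R * 2 + (z %% 2)%Z%:~R.
  by rewrite {1}hd intrD intrM.
have -> : x - 2^-1 * (z %% 2)%Z%:~R = (z %/ 2)%Z%:~R by lra.
exact: intr_int.
Qed.

Lemma kk_cover b : intv (b + b) -> exists r s : int,
  (r = 0 \/ r = 1) /\ (s = 0 \/ s = 1) /\ star_eq (transl b) (kk r s).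
Proof.
move=> h.
have := h 0; rewrite mxE => /half_parity [r [hr ir]].
have := h 1; rewrite mxE => /half_parity [s [hs js]].
exists r, s; split => //; split => //.
apply/star_eq_rel; left; split => //.
apply: intvNE; rewrite opprB; apply: ord2P; rewrite mxE [X in _ + X]mxE ?kk0 ?kk1 //.
Qed.

Lemma inK_kk r s : inK (kk r s).
Proof.
have hv : intv (tr (kk r s) + tr (kk r s)).
  by apply: ord2P; rewrite mxE ?kk0 ?kk1 -mulrDl half_double mul1r; exact: intr_int.
split; first by apply/inN_char; exact: Nc_transl.
by exists (kk r s); [exact: gen_K | exact: star_eq_refl].
Qed.

Lemma inK_iff f : inN f -> ((lin f = 1%:M \/ lin f = - 1%:M) <-> inK f).
Proof.
move=> hN; have [_ _ _ ha] := (inN_char f).1 hN; split.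
  case=> El.
    split => //; exists f; last exact: star_eq_refl.
    by case: f El ha {hN} => a A /= ->; exact: gen_K.
  split => //; exists (transl (- tr f)).
    by apply: gen_K; rewrite -opprD; exact: intvN.
  apply/star_eq_rel; right; split; first by rewrite /= El opprK.
  by rewrite /= addNr; exact: intv0.
case=> _ [[b B] hg hs]; have [/= EB _] := Kform _ hg; subst B.
move/star_eq_rel: hs => [[/= E _]|[/= E _]]; [left; by rewrite -E | right].
by rewrite -[lin f]opprK -E.
Qed.

Theorem lemma21 :
  (inN (transl (2^-1 *: e1)) /\ inN (transl (2^-1 *: e2))) /\
  (exists k0 k1 k2 k3 : affmap,
      [/\ inK k0, inK k1, inK k2 & inK k3] /\
      (~ star_eq k0 k1 /\ ~ star_eq k0 k2 /\ ~ star_eq k0 k3 /\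
       ~ star_eq k1 k2 /\ ~ star_eq k1 k3 /\ ~ star_eq k2 k3) /\
      (forall f, inK f ->
         star_eq f k0 \/ star_eq f k1 \/ star_eq f k2 \/ star_eq f k3)) /\
  (forall f, inK f -> star_eq (aff_comp f f) aff_id) /\
  (forall f g, inN f -> inK g -> inK (aff_comp (aff_comp f g) (aff_inv f))) /\
  (forall f, inN f -> exists2 B, inGLZ B & lin f = Zmat B) /\
  (forall f g, inN f -> inN g -> star_eq f g ->
     lin f = lin g \/ lin f = - lin g) /\
  (forall f g, inN f -> inN g ->
     lin (aff_comp f g) = lin f *m lin g) /\
  (forall B, inGLZ B -> exists2 f, inN f &
     (lin f = Zmat B \/ lin f = - Zmat B)) /\
  (forall f, inN f -> ((lin f = 1%:M \/ lin f = - 1%:M) <-> inK f)) /\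
  (forall B, inGLZ B -> inN (linmap (Zmat B))) /\
  (forall B, inGLZ B -> star_eq (linmap (Zmat B)) (linmap (Zmat (- B)))) /\
  (forall B1 B2, inGLZ B1 -> inGLZ B2 ->
     star_eq (aff_comp (linmap (Zmat B1)) (linmap (Zmat B2)))
             (linmap (Zmat (B1 *m B2)))) /\
  (forall B1 B2, inGLZ B1 -> inGLZ B2 ->
     star_eq (linmap (Zmat B1)) (linmap (Zmat B2)) -> B1 = B2 \/ B1 = - B2) /\
  (forall B, inGLZ B -> lin (linmap (Zmat B)) = Zmat B).
Proof.
split.
  by split; apply/inN_char; apply: Nc_transl; rewrite -scalerDl half_double scale1r;
    [exact: intv_e1 | exact: intv_e2].
split.
  exists (kk 0 0), (kk 1 0), (kk 0 1), (kk 1 1); split; first by split; apply: inK_kk.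
  split.
    by do ![split|]; apply: kk_neq; lia.
  move=> f [_ [[b B] hg hs]]; have [/= EB hb] := Kform _ hg; subst B.
  have [r [s [hr [hs' he]]]] := kk_cover _ hb.
  have h := star_eq_trans _ _ _ hs he.
  by case: hr => ?; case: hs' => ?; subst; tauto.
split.
  move=> f [hN [[b B] hg hs]]; have [/= EB hb] := Kform _ hg; subst B.
  apply/star_eq_rel; move/star_eq_rel: hs => [[/= E hv]|[/= E hv]].
    left; rewrite /= -E mulmx1 mul1mx; split => //.
    rewrite sub0r; apply: intvN.
    have -> : tr f + tr f = (b + b) - ((b - tr f) + (b - tr f)).
      by apply/matrixP => i j; rewrite !mxE; ring.
    by apply: intvB => //; apply: intvD.
  have Ef : lin f = - 1%:M by rewrite -[lin f]opprK -E.
  left; rewrite /= Ef mulNmx mulmxN opprK mul1mx; split => //.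
  by rewrite mulNmx mul1mx subrr subr0; exact: intv0.
split.
  move=> f g hf hg.
  have hN : inN (cj f g).
    have Nf := (inN_char f).1 hf; have Ng := (inN_char g).1 hg.1.
    by apply/inN_char; apply: Nc_comp; [apply: Nc_comp | apply: Nc_inv].
  have [uA _ _ _] := (inN_char f).1 hf.
  change (inK (cj f g)); apply/(inK_iff _ hN); rewrite cj_lin.
  case: ((inK_iff _ hg.1).2 hg) => ->; [left | right];
    by rewrite ?mulmxN ?mulNmx mulmx1 mulmxV.
split.
  move=> f /inN_char [uA iA iAi _]; exists (Zof (lin f)); last by rewrite ZofK.
  have h : Zof (lin f) *m Zof (invmx (lin f)) = 1%:M.
    by apply: Zmat_inj; rewrite ZmatM !ZofK // mulmxV // Zmat1.
  exact: (mulmx1_unit h).1.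
split.
  by move=> f g _ _ /star_eq_rel [[E _]|[E _]]; [left | right]; rewrite E ?opprK.
split; first by [].
split.
  by move=> B hB; exists (linmap (Zmat B)); [apply/inN_char; exact: Nc_Zmat | left].
split; first exact: inK_iff.
split; first by move=> B hB; apply/inN_char; exact: Nc_Zmat.
split.
  move=> B hB; apply/star_eq_rel; right; rewrite /= ZmatN; split => //.
  by rewrite addr0; exact: intv0.
split.
  move=> B1 B2 _ _; rewrite /aff_comp /linmap /= mulmx0 addr0 -ZmatM.
  exact: star_eq_refl.
split.
  move=> B1 B2 _ _ /star_eq_rel [[/= E _]|[/= E _]].
    by left; apply: Zmat_inj; rewrite E.
  by right; rewrite -ZmatN in E; rewrite (Zmat_inj _ _ E) opprK.
by [].
Qed.
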